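(* Let $p\ge1$ and let $F:\mathbb{R}\to E^p$ be $D$-continuous. Then for every compact set $U\subset\mathbb{R}$, the set $F(U)=\{F(t): t\in U\}$ is uniformly-support-bounded, i.e. there is a compact set $K\subset\mathbb{R}^p$ such that $[F(t)]_0\subset K$ for all $t\in U$.
   Context: A fuzzy subset of $\mathbb{R}^p$ is a function $u:\mathbb{R}^p\to[0,1]$. Its $\alpha$-cut is $[u]_\alpha=\{x\in\mathbb{R}^p: u(x)\ge\alpha\}$ for $\alpha\in(0,1]$, and $[u]_0=\overline{\{x\in\mathbb{R}^p: u(x)>0\}}$. The set $E^p$ of $p$-dimensional fuzzy numbers consists of all fuzzy subsets $u$ of $\mathbb{R}^p$ such that $[u]_\alpha$ is a nonempty compact convex subset of $\mathbb{R}^p$ for every $\alpha\in[0,1]$. The sendograph of $u\in E^p$ is $\mathrm{send}\,u=\{(x,\alpha)\in[u]_0\times[0,1]: u(x)\ge\alpha\}\subset\mathbb{R}^{p+1}$. For nonempty compact $U,V\subset\mathbb{R}^{p+1}$ (with the Euclidean metric $d$), the Hausdorff metric is $H(U,V)=\max\{H^*(U,V),H^*(V,U)\}$ with $H^*(U,V)=\sup_{a\in U}\inf_{b\in V}d(a,b)$. The sendograph metric on $E^p$ is $D(u,v)=H(\mathrm{send}\,u,\mathrm{send}\,v)$. A function $F:\mathbb{R}\to E^p$ is $D$-continuous if $\lim_{y\to x}D(F(y),F(x))=0$ for every $x\in\mathbb{R}$. *)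

(* Defs.v *)
From HB Require Import structures.
From mathcomp Require Import all_boot all_order all_algebra.
From mathcomp Require Import all_classical all_reals all_analysis.
Set Implicit Arguments. Unset Strict Implicit. Unset Printing Implicit Defensive.
Import Order.TTheory GRing.Theory Num.Theory.
Import numFieldNormedType.Exports.
Local Open Scope classical_set_scope.
Local Open Scope ring_scope.

Section FuzzyDefs.
Variables (R : realType) (p : nat).

Definition alpha_cut (u : 'rV[R]_p -> R) (a : R) : set 'rV[R]_p :=
  [set x | a <= u x].

Definition cut0 (u : 'rV[R]_p -> R) : set 'rV[R]_p :=
  closure [set x | 0 < u x].

Definition level (u : 'rV[R]_p -> R) (a : R) : set 'rV[R]_p :=
  if a == 0 then cut0 u else alpha_cut u a.

Definition convex_set_rV (A : set 'rV[R]_p) : Prop :=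
  forall x y t, A x -> A y -> 0 <= t <= 1 -> A (t *: x + (1 - t) *: y).

Definition fuzzy_number (u : 'rV[R]_p -> R) : Prop :=
  (forall x, 0 <= u x <= 1) /\
  (forall a, 0 <= a <= 1 ->
     level u a !=set0 /\ compact (level u a) /\ convex_set_rV (level u a)).

Definition send (u : 'rV[R]_p -> R) : set ('rV[R]_p * R) :=
  [set z | cut0 u z.1 /\ 0 <= z.2 <= 1 /\ z.2 <= u z.1].

Definition edist (a b : 'rV[R]_p * R) : R :=
  Num.sqrt (\sum_(i < p) (a.1 ord0 i - b.1 ord0 i) ^+ 2 + (a.2 - b.2) ^+ 2).

Definition hausdorff_star (U V : set ('rV[R]_p * R)) : R :=
  sup [set r | exists2 a, U a & r = inf [set s | exists2 b, V b & s = edist a b]].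

Definition hausdorff (U V : set ('rV[R]_p * R)) : R :=
  Num.max (hausdorff_star U V) (hausdorff_star V U).

Definition Dsend (u v : 'rV[R]_p -> R) : R := hausdorff (send u) (send v).

Definition D_continuous (F : R -> 'rV[R]_p -> R) : Prop :=
  forall x : R, Dsend (F y) (F x) @[y --> x^'] --> 0.

End FuzzyDefs.

(* Main.v *)
Require Import Defs.
From HB Require Import structures.
From mathcomp Require Import all_boot all_order all_algebra.
From mathcomp Require Import all_classical all_reals all_analysis.
From mathcomp Require Import lra.
Import Order.TTheory GRing.Theory Num.Theory.
Import numFieldNormedType.Exports.
Local Open Scope classical_set_scope.
Local Open Scope ring_scope.

Section Helpers.
Variables (R : realType) (p : nat).

Lemma entry_le (x : 'rV[R]_p) i : `|x ord0 i| <= `|x|.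
Proof.
rewrite [leRHS]/Num.norm /= mx_normrE; apply/bigmax_geP; right => /=.
by exists (ord0, i).
Qed.

Lemma mxnorm_le (x : 'rV[R]_p) c : 0 <= c ->
  (forall i, `|x ord0 i| <= c) -> `|x| <= c.
Proof.
move=> c0 h; rewrite [leLHS]/Num.norm /= mx_normrE; apply/bigmax_leP; split=> //.
by case=> i j _ /=; rewrite (ord1 i).
Qed.

Lemma edist_ge0 (a b : 'rV[R]_p * R) : 0 <= Defs.edist a b.
Proof. exact: sqrtr_ge0. Qed.

Lemma edist_ge (a b : 'rV[R]_p * R) : `|a.1 - b.1| <= Defs.edist a b.
Proof.
apply: mxnorm_le; first exact: edist_ge0.
move=> i; rewrite !mxE /Defs.edist -sqrtr_sqr ler_sqrt; last first.
  by apply: addr_ge0; [apply: sumr_ge0 => *|]; exact: sqr_ge0.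
rewrite (bigD1 i) //=.
have h1 : 0 <= \sum_(j < p | j != i) (a.1 ord0 j - b.1 ord0 j) ^+ 2.
  by apply: sumr_ge0 => *; exact: sqr_ge0.
have h2 := sqr_ge0 (a.2 - b.2).
lra.
Qed.

Lemma edist_le (a b : 'rV[R]_p * R) :
  Defs.edist a b <= (p.+1)%:R * (`|a.1 - b.1| + `|a.2 - b.2|).
Proof.
set c := `|a.1 - b.1|; set e := `|a.2 - b.2|.
have c0 : 0 <= c by exact: normr_ge0.
have e0 : 0 <= e by exact: normr_ge0.
have hs : \sum_(j < p) (a.1 ord0 j - b.1 ord0 j) ^+ 2 <= p%:R * c ^+ 2.
  apply: le_trans (_ : \sum_(j < p) c ^+ 2 <= _).
    apply: ler_sum => j _.
    have := entry_le (a.1 - b.1) j; rewrite !mxE -/c => hj.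
    rewrite -(real_normK (num_real (a.1 ord0 j - b.1 ord0 j))).
    have := normr_ge0 (a.1 ord0 j - b.1 ord0 j); nra.
  by rewrite sumr_const card_ord mulr_natl.
have he : (a.2 - b.2) ^+ 2 = e ^+ 2 by rewrite real_normK ?num_real.
have P0 : 0 <= p%:R :> R by [].
rewrite /Defs.edist -[leRHS]ger0_norm ?mulr_ge0 ?addr_ge0 // -sqrtr_sqr ler_sqrt;
  last exact: sqr_ge0.
rewrite he -[p.+1]addn1 natrD.
set P := p%:R in hs P0 *.
have h1 : c ^+ 2 + e ^+ 2 <= (c + e) ^+ 2 by nra.
have h2 : 1 + P <= (P + 1) ^+ 2 by nra.
have h3 : 0 <= c ^+ 2 + e ^+ 2 by nra.
have h4 : (1 + P) * (c ^+ 2 + e ^+ 2) <= ((P + 1) * (c + e)) ^+ 2.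
  rewrite exprMn; apply: le_trans (ler_wpM2r h3 h2) _.
  apply: ler_wpM2l; [exact: sqr_ge0 | exact: h1].
apply: le_trans h4; nra.
Qed.

End Helpers.

Section Main.
Variables (R : realType) (p : nat) (F : R -> 'rV[R]_p -> R).
Hypothesis hF : forall t, fuzzy_number (F t).
Hypothesis hD : D_continuous F.

Lemma cut0_props t : compact (cut0 (F t)) /\ cut0 (F t) !=set0.
Proof.
have [_ h] := hF t; have [ne [cpt _]] := h 0 (ltac:(by rewrite lexx ler01)).
by move: ne cpt; rewrite /level eqxx.
Qed.

Lemma cut0_bound t : exists B, forall z, cut0 (F t) z -> `|z| <= B.
Proof.
have [cpt _] := cut0_props t.
have [M [_ HM]] := compact_bounded cpt.
by exists (M + 1) => z hz; apply: (HM (M + 1) _ z hz); rewrite ltrDl.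
Qed.

Lemma local_bound (x : R) : exists B, \forall y \near x, forall z, cut0 (F y) z -> `|z| <= B.
Proof.
have [Bx HBx] := cut0_bound x.
have [_ [z0 hz0]] := cut0_props x.
have hD1 : \forall t \near x^', `|0 - Dsend (F t) (F x)| < 1 := cvgr_dist_lt _ _ (hD x) 1 ltr01.
have hD2 : \forall y \near x, y != x -> `|0 - Dsend (F y) (F x)| < 1 := hD1 (dnbhs_filter x).
exists (Bx + 2); apply: filterS hD2 => y hy z hz.
have [exy|yx] := eqVneq y x.
  by subst y; apply: le_trans (HBx z hz) _; rewrite lerDl.
have hlt := hy yx; rewrite sub0r normrN in hlt.
have hD3 : Dsend (F y) (F x) < 1 := le_lt_trans (ler_norm _) hlt.
have [By HBy] := cut0_bound y.
pose Ea (a : 'rV[R]_p * R) := [set s | exists2 b, send (F x) b & s = Defs.edist a b].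
have hlb a : has_lbound (Ea a).
  by exists 0 => s [b _ ->]; exact: edist_ge0.
have hb0 : send (F x) (z0, 0).
  by split => //=; split; [rewrite lexx ler01|have [+ _] := hF x; move=> /(_ z0)/andP[]].
have hne a : Ea a !=set0 by exists (Defs.edist a (z0, 0)), (z0, 0).
have ha : send (F y) (z, 0).
  by split => //=; split; [rewrite lexx ler01|have [+ _] := hF y; move=> /(_ z)/andP[]].
pose Rs := [set r | exists2 a, send (F y) a & r = inf (Ea a)].
have hsup : has_sup Rs.
  split; first by exists (inf (Ea (z, 0))), (z, 0).
  exists ((p.+1)%:R * (By + Bx + 1)) => r [a [ha1 [ha2 _]] ->].
  have hE : Ea a (Defs.edist a (z0, 0)) by exists (z0, 0).
  apply: le_trans (ge_inf (hlb a) hE) _.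
  apply: le_trans (@edist_le _ _ a (z0, 0)) _.
  apply: ler_wpM2l => //=.
  apply: lerD.
    apply: le_trans (ler_normB _ _) _; apply: lerD; [exact: HBy|exact: HBx].
  by rewrite subr0; move/andP: ha2 => [h0 h1]; rewrite ger0_norm.
have hle : inf (Ea (z, 0)) < 1.
  apply: le_lt_trans hD3.
  rewrite /Dsend /hausdorff le_max; apply/orP; left.
  by apply: sup_upper_bound hsup _ _; exists (z, 0).
have [s [b hb ->] hs] := inf_lt (hne (z, 0)) hle.
have := @edist_ge _ _ (z, 0) b => /= hzb.
have [hbc _] := hb.
have hnb := HBx _ hbc.
rewrite -(subrK b.1 z); apply: le_trans (ler_normD _ _) _.
have : `|z - b.1| < 1 := le_lt_trans hzb hs.
lra.
Qed.
End Main.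

Theorem theorem2p2 (R : realType) (p : nat) (hp : (1 <= p)%N)
  (F : R -> 'rV[R]_p -> R)
  (hF : forall t, fuzzy_number (F t))
  (hD : D_continuous F) :
  forall U : set R, compact U ->
    exists K : set 'rV[R]_p, compact K /\
      (forall t, U t -> cut0 (F t) `<=` K).
Proof.
move=> U cU.
have /compact_near_coveringP cov := cU.
have := cov R (pinfty_nbhs R)
  (fun M y => forall z, cut0 (F y) z -> `|z| <= M) _.
case.
- move=> x _.
  have [B HB] := @local_bound _ _ _ hF hD (x : R).
  exists (fun y => forall z, cut0 (F y) z -> `|z| <= B, [set M | B <= M]).
    by split => //=; apply: nbhs_pinfty_ge; exact: num_real.
  by case=> y M /= [h1 h2] z hz; apply: le_trans (h1 z hz) h2.
move=> M0 [M0r HM0].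
exists (closed_ball_ Num.norm (0 : 'rV[R]_p) (M0 + 1)); split.
  apply: bounded_closed_compact; last exact: closed_closed_ball_.
  exists (M0 + 1); split; first exact: num_real.
  by move=> M hM z; rewrite /closed_ball_ /= sub0r normrN => h; apply: le_trans h (ltW hM).
move=> t Ut z hz; rewrite /closed_ball_ /= sub0r normrN.
by apply: (HM0 (M0 + 1) _ t Ut z hz); rewrite ltrDl.
Qed.
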